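(* For every $\alpha>1$, the Ces\`aro operator $C_1(f)(z)=\int_0^z\frac{f(w)}{w(1-w)}\,dw$ is a bounded linear operator from $(\mathcal{B}_\alpha^0,\|\cdot\|_{\mathcal{B}_\alpha})$ to itself.
   Context: $\mathbb{D}=\{z\in\mathbb{C}:|z|<1\}$. For $\alpha>0$, the $\alpha$-Bloch space $\mathcal{B}_\alpha$ is the space of analytic functions $f$ on $\mathbb{D}$ with $\|f\|_{\mathcal{B}_\alpha}:=\sup_{z\in\mathbb{D}}(1-|z|^2)^\alpha|f'(z)|<\infty$. $\mathcal{B}_\alpha^0=\{f\in\mathcal{B}_\alpha: f(0)=0\}$, normed by $\|\cdot\|_{\mathcal{B}_\alpha}$. *)

(* Defs.v *)
From Stdlib Require Import Reals.
From Coquelicot Require Export Coquelicot.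
Open Scope R_scope.

Definition is_cderive (f : C -> C) (z d : C) : Prop :=
  @is_derive C_AbsRing C_NormedModule f z d.

Definition analytic_disc (f : C -> C) : Prop :=
  forall z : C, Cmod z < 1 -> exists d : C, is_cderive f z d.

Definition bloch_bound (alpha : R) (f : C -> C) (M : R) : Prop :=
  forall z d : C, Cmod z < 1 -> is_cderive f z d ->
    Rpower (1 - Cmod z ^ 2) alpha * Cmod d <= M.

Definition in_bloch0 (alpha : R) (f : C -> C) : Prop :=
  analytic_disc f /\ f (RtoC 0) = RtoC 0 /\ exists M : R, bloch_bound alpha f M.

(* Cesaro operator C_1 f (z) = int_0^z f(w)/(w(1-w)) dw, the integral taken
   along the segment [0,z]: w = t z, dw = z dt, t in [0,1]. *)
Definition cesaro1 (f : C -> C) (z : C) : C :=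
  @RInt C_R_CompleteNormedModule
    (fun t : R => let w := Cmult (RtoC t) z in
                  Cmult (Cdiv (f w) (Cmult w (Cminus (RtoC 1) w))) z) 0 1.

(* Main.v *)
Require Import Defs.
From Stdlib Require Import Reals Lra Psatz.
From Coquelicot Require Import Coquelicot.
Open Scope R_scope.

Lemma norm_CR (x : C) : @norm R_AbsRing C_R_NormedModule x = Cmod x.
Proof.
  destruct x as [x y]. unfold Cmod. cbv [norm NormedModule.norm NormedModule.mixin C_R_NormedModule NormedModule.class prod_NormedModule prod_NormedModule_mixin]. unfold prod_norm. simpl.
  change (norm x) with (Rabs x). change (norm y) with (Rabs y). rewrite !Rmult_1_r, <- !Rabs_mult, !Rabs_right by (apply Rle_ge, Rle_0_sqr). reflexivity.
Qed.

Definition deriv_eps (f : C -> C) z l := forall eps, 0 < eps -> exists delta, 0 < delta /\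
  forall w, Cmod (w - z) < delta -> Cmod (f w - f z - l * (w - z)) <= eps * Cmod (w - z).

Lemma cderive_eps f z l : is_cderive f z l -> deriv_eps f z l.
Proof.
  intros [_ H] eps Heps.
  specialize (H z (fun P HP => HP) (mkposreal eps Heps)).
  apply (@locally_le_locally_norm C_AbsRing (AbsRing_NormedModule C_AbsRing)) in H. destruct H as [d Hd].
  exists d; split; [apply cond_pos|]. intros w Hw.
  replace (l * (w - z))%C with ((w - z) * l)%C by ring.
  apply (Hd w). exact Hw.
Qed.

Lemma eps_cderive f z l : deriv_eps f z l -> is_cderive f z l.
Proof.
  intros H. split. apply is_linear_scal_l.
  intros x Hx. apply (@is_filter_lim_locally_unique C_AbsRing (AbsRing_NormedModule C_AbsRing)) in Hx. subst x.
  intros [eps Heps]. destruct (H eps Heps) as [d [Hd Hw]].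
  apply (@locally_norm_le_locally C_AbsRing (AbsRing_NormedModule C_AbsRing)). exists (mkposreal d Hd).
  intros w Hbw. generalize (Hw w Hbw).
  replace (l * (w - z))%C with ((w - z) * l)%C by ring. exact (fun h => h).
Qed.

Definition ccont (g : C -> C) w := forall eps, 0 < eps -> exists delta, 0 < delta /\
  forall v, Cmod (v - w) < delta -> Cmod (g v - g w) < eps.

Lemma deriv_ccont f z l : deriv_eps f z l -> ccont f z.
Proof.
  intros H eps Heps. destruct (H 1 Rlt_0_1) as [d [Hd Hw]].
  exists (Rmin d (eps / (Cmod l + 2))). split.
  { apply Rmin_pos; auto. apply Rdiv_lt_0_compat; auto. pose proof (Cmod_ge_0 l); lra. }
  intros v Hv. specialize (Hw v (Rlt_le_trans _ _ _ Hv (Rmin_l _ _))).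
  assert (Hv2 := Rlt_le_trans _ _ _ Hv (Rmin_r _ _)).
  replace (f v - f z)%C with ((f v - f z - l * (v - z)) + l * (v - z))%C by ring.
  eapply Rle_lt_trans. apply Cmod_triangle. rewrite Cmod_mult.
  pose proof (Cmod_ge_0 l). pose proof (Cmod_ge_0 (v - z)).
  assert (Cmod (v - z) * (Cmod l + 2) < eps).
  { apply Rmult_lt_reg_r with (/ (Cmod l + 2)). apply Rinv_0_lt_compat; lra.
    rewrite Rmult_assoc, Rinv_r by lra. rewrite Rmult_1_r. exact Hv2. }
  nra.
Qed.

Definition seg (a b : C) (t : R) : C := (a + RtoC t * (b - a))%C.
Definition igd (g : C -> C) a b (t : R) : C := (g (seg a b t) * (b - a))%C.
Definition Sg g a b : C := RInt (V:=C_R_CompleteNormedModule) (igd g a b) 0 1.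
Definition contseg g a b := forall t, 0 <= t <= 1 -> ccont g (seg a b t).

Lemma scal_CR (r : R) (v : C) : @scal R_AbsRing C_R_NormedModule r v = (RtoC r * v)%C.
Proof. destruct v as [x y]. unfold Cmult, RtoC; simpl. unfold scal; simpl.
  unfold prod_scal; simpl. change (scal r x) with (r * x). change (scal r y) with (r * y).
  f_equal; ring. Qed.

Lemma plus_CR (u v : C) : @plus C_R_NormedModule u v = (u + v)%C.
Proof. reflexivity. Qed.
Lemma minus_CR (u v : C) : @minus C_R_NormedModule u v = (u - v)%C.
Proof. reflexivity. Qed.
Lemma opp_CR (u : C) : @opp C_R_NormedModule u = (- u)%C.
Proof. reflexivity. Qed.
Lemma zero_CR : @zero C_R_NormedModule = RtoC 0.
Proof. reflexivity. Qed.

Lemma Cmod_RtoC_mult (r : R) (v : C) : Cmod (RtoC r * v) = Rabs r * Cmod v.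
Proof. rewrite Cmod_mult, Cmod_R. reflexivity. Qed.

Lemma rcont_continuous (phi : R -> C) t :
  (forall eps, 0 < eps -> exists delta, 0 < delta /\ forall s, Rabs (s - t) < delta -> Cmod (phi s - phi t) < eps) ->
  @continuous R_UniformSpace C_R_CompleteNormedModule phi t.
Proof.
  intros H. apply filterlim_locally. intros eps.
  destruct (H eps (cond_pos eps)) as [d [Hd Hs]].
  exists (mkposreal d Hd). intros s Hbs.
  apply (@norm_compat1 R_AbsRing C_R_NormedModule).
  rewrite norm_CR. apply Hs. exact Hbs.
Qed.

Lemma seg_diff a b s t : (seg a b s - seg a b t)%C = (RtoC (s - t) * (b - a))%C.
Proof. unfold seg. rewrite RtoC_minus. ring. Qed.

Lemma ex_S g a b : contseg g a b -> ex_RInt (V:=C_R_CompleteNormedModule) (igd g a b) 0 1.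
Proof.
  intros H. apply ex_RInt_continuous. intros t Ht.
  rewrite Rmin_left, Rmax_right in Ht by lra.
  apply rcont_continuous. intros eps Heps.
  set (K := Cmod (b - a) + 1).
  assert (HK : 0 < K) by (unfold K; pose proof (Cmod_ge_0 (b - a)); lra).
  destruct (H t Ht (eps / K)) as [d [Hd Hv]]. apply Rdiv_lt_0_compat; lra.
  exists (d / K). split. apply Rdiv_lt_0_compat; lra.
  intros s Hs. unfold igd.
  replace (g (seg a b s) * (b - a) - g (seg a b t) * (b - a))%C
    with ((g (seg a b s) - g (seg a b t)) * (b - a))%C by ring.
  rewrite Cmod_mult.
  assert (Hl : Cmod (seg a b s - seg a b t) < d).
  { rewrite seg_diff, Cmod_RtoC_mult.
    destruct (Req_dec (Cmod (b - a)) 0) as [E|E]. rewrite E, Rmult_0_r. exact Hd.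
    apply Rle_lt_trans with (Rabs (s - t) * K).
    apply Rmult_le_compat_l. apply Rabs_pos. unfold K; lra.
    apply Rmult_lt_reg_r with (/ K). apply Rinv_0_lt_compat; lra.
    rewrite Rmult_assoc, Rinv_r by lra. rewrite Rmult_1_r. exact Hs. }
  specialize (Hv _ Hl).
  pose proof (Cmod_ge_0 (b - a)). pose proof (Cmod_ge_0 (g (seg a b s) - g (seg a b t))).
  assert (eps / K * Cmod (b - a) <= eps).
  { unfold Rdiv. rewrite Rmult_assoc. rewrite <- (Rmult_1_r eps) at 2.
    apply Rmult_le_compat_l. lra.
    apply Rmult_le_reg_l with K. lra. rewrite <- Rmult_assoc, Rinv_r by lra. unfold K; lra. }
  destruct (Req_dec (Cmod (b - a)) 0) as [E|E]. rewrite E, Rmult_0_r. lra.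
  apply Rlt_le_trans with (eps / K * Cmod (b - a)); [|lra].
  apply Rmult_lt_compat_r; lra.
Qed.

Lemma S_bound g a b B : contseg g a b -> (forall t, 0 <= t <= 1 -> Cmod (g (seg a b t)) <= B) ->
  Cmod (Sg g a b) <= Cmod (b - a) * B.
Proof.
  intros Hc HB. unfold Sg.
  rewrite <- (norm_CR (RInt (V:=C_R_CompleteNormedModule) (igd g a b) 0 1)).
  replace (Cmod (b - a) * B) with ((1 - 0) * (Cmod (b - a) * B)) by ring.
  apply (norm_RInt_le_const (V:=C_R_NormedModule) (igd g a b)).
  lra. intros t Ht. rewrite norm_CR. unfold igd. rewrite Cmod_mult, Rmult_comm.
  apply Rmult_le_compat_l. apply Cmod_ge_0. apply HB; lra.
  exact (RInt_correct (V:=C_R_CompleteNormedModule) _ _ _ (ex_S g a b Hc)).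
Qed.

Lemma RInt_CR_ext (f h : R -> C) a b : (forall x, f x = h x) ->
  RInt (V:=C_R_CompleteNormedModule) f a b = RInt (V:=C_R_CompleteNormedModule) h a b.
Proof. intros H. apply RInt_ext. intros; apply H. Qed.

Lemma S_split g a b s : contseg g a b -> 0 <= s <= 1 ->
  Sg g a b = (Sg g a (seg a b s) + Sg g (seg a b s) b)%C.
Proof.
  intros Hc Hs. pose proof (ex_S g a b Hc) as Hex.
  set (f := igd g a b) in *.
  assert (H1 : ex_RInt (V:=C_R_CompleteNormedModule) f 0 s) by (apply ex_RInt_Chasles_1 with 1; auto; lra).
  assert (H2 : ex_RInt (V:=C_R_CompleteNormedModule) f s 1) by (apply ex_RInt_Chasles_2 with 0; auto; lra).
  unfold Sg. fold f. rewrite <- (RInt_Chasles (V:=C_R_CompleteNormedModule) f 0 s 1 H1 H2).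
  rewrite plus_CR. f_equal.
  - symmetry. rewrite (RInt_CR_ext (igd g a (seg a b s)) (fun y => @scal R_AbsRing C_R_NormedModule s (f (s * y + 0)))).
    rewrite (RInt_comp_lin (V:=C_R_CompleteNormedModule)).
    f_equal; ring. replace (s * 0 + 0) with 0 by ring. replace (s * 1 + 0) with s by ring. exact H1.
    intros y. rewrite scal_CR. unfold f, igd.
    replace (seg a (seg a b s) y) with (seg a b (s * y + 0)).
    unfold seg. rewrite RtoC_plus, RtoC_mult. ring.
    unfold seg. rewrite RtoC_plus, RtoC_mult. ring.
  - symmetry. rewrite (RInt_CR_ext (igd g (seg a b s) b) (fun y => @scal R_AbsRing C_R_NormedModule (1 - s) (f ((1 - s) * y + s)))).
    rewrite (RInt_comp_lin (V:=C_R_CompleteNormedModule)).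
    f_equal; ring. replace ((1 - s) * 0 + s) with s by ring. replace ((1 - s) * 1 + s) with 1 by ring. exact H2.
    intros y. rewrite scal_CR. unfold f, igd.
    replace (seg (seg a b s) b y) with (seg a b ((1 - s) * y + s)).
    unfold seg. rewrite RtoC_plus, RtoC_mult, RtoC_minus. ring.
    unfold seg. rewrite RtoC_plus, RtoC_mult, RtoC_minus. ring.
Qed.

Lemma S_rev g a b : contseg g a b -> Sg g b a = (- Sg g a b)%C.
Proof.
  intros Hc. pose proof (ex_S g a b Hc) as Hex.
  set (f := igd g a b) in *.
  unfold Sg. fold f.
  rewrite (RInt_CR_ext (igd g b a) (fun y => @scal R_AbsRing C_R_NormedModule (Ropp 1) (f ((Ropp 1) * y + 1)))).
  rewrite (RInt_comp_lin (V:=C_R_CompleteNormedModule)).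
  replace ((Ropp 1) * 0 + 1) with 1 by ring. replace ((Ropp 1) * 1 + 1) with 0 by ring.
  rewrite <- (opp_RInt_swap (V:=C_R_CompleteNormedModule)) by exact Hex. reflexivity.
  replace ((Ropp 1) * 0 + 1) with 1 by ring. replace ((Ropp 1) * 1 + 1) with 0 by ring.
  apply ex_RInt_swap. exact Hex.
  intros y. rewrite scal_CR. unfold f, igd.
  replace (seg b a y) with (seg a b ((Ropp 1) * y + 1)).
  rewrite RtoC_opp. ring.
  unfold seg. rewrite RtoC_plus, RtoC_mult, RtoC_opp. ring.
Qed.

Lemma S_minus g1 g2 a b : contseg g1 a b -> contseg g2 a b ->
  Sg (fun w => g1 w - g2 w)%C a b = (Sg g1 a b - Sg g2 a b)%C.
Proof.
  intros H1 H2. unfold Sg. rewrite <- minus_CR.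
  rewrite <- (RInt_minus (V:=C_R_CompleteNormedModule)) by (apply ex_S; auto).
  apply RInt_CR_ext. intros x. rewrite minus_CR. unfold igd. ring.
Qed.

Lemma S_const c a b : Sg (fun _ => c) a b = (c * (b - a))%C.
Proof.
  unfold Sg, igd. rewrite (RInt_const (V:=C_R_CompleteNormedModule)).
  rewrite scal_CR. replace (1 - 0) with 1 by ring. ring.
Qed.

Lemma S_affine c0 c1 a b :
  Sg (fun w => c0 + c1 * w)%C a b = (c0 * (b - a) + c1 * (b * b - a * a) * RtoC (/ 2))%C.
Proof.
  set (U := ((c0 + c1 * a) * (b - a))%C). set (W := (c1 * (b - a) * (b - a))%C).
  set (F := fun t : R => @plus C_R_NormedModule (@scal R_AbsRing C_R_NormedModule t U)
                           (@scal R_AbsRing C_R_NormedModule (t * t / 2) W)).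
  set (dF := fun t : R => @plus C_R_NormedModule (@scal R_AbsRing C_R_NormedModule 1 U)
                           (@scal R_AbsRing C_R_NormedModule t W)).
  assert (HD : forall t, is_derive F t (dF t)).
  { intros t. unfold F, dF. apply (@is_derive_plus R_AbsRing C_R_NormedModule).
    apply (@is_derive_scal_l R_AbsRing C_R_NormedModule). exact (@is_derive_id R_AbsRing _).
    apply (@is_derive_scal_l R_AbsRing C_R_NormedModule).
    auto_derive. trivial. field. }
  assert (HI : is_RInt (V:=C_R_CompleteNormedModule) dF 0 1 (minus (F 1) (F 0))).
  { apply (is_RInt_derive (V:=C_R_CompleteNormedModule)).
    intros; apply HD. intros t _.
    apply (@ex_derive_continuous R_AbsRing C_R_NormedModule).
    eexists. unfold dF. apply (@is_derive_plus R_AbsRing C_R_NormedModule).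
    apply (@is_derive_const R_AbsRing C_R_NormedModule).
    apply (@is_derive_scal_l R_AbsRing C_R_NormedModule). exact (@is_derive_id R_AbsRing _). }
  unfold Sg. rewrite (RInt_CR_ext (igd (fun w => c0 + c1 * w)%C a b) dF).
  rewrite (is_RInt_unique _ _ _ _ HI).
  unfold F. rewrite minus_CR, !plus_CR, !scal_CR. unfold U, W.
  replace (RtoC (1 * 1 / 2)) with (RtoC (/ 2)) by (f_equal; field).
  replace (RtoC (0 * 0 / 2)) with (RtoC 0) by (f_equal; field). unfold plus; simpl. change (prod_plus ?u ?v) with (Cplus u v). rewrite RtoC_inv by lra. field.
  intros x. unfold dF, igd, seg. unfold plus; simpl. change (prod_plus ?u ?v) with (Cplus u v). rewrite !scal_CR. unfold U, W. ring.
Qed.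

Definition convex (P : C -> Prop) := forall a b t, P a -> P b -> 0 <= t <= 1 -> P (seg a b t).
Definition seqclosed (P : C -> Prop) := forall (u : nat -> C) p, (forall n, P (u n)) ->
   (forall eps, 0 < eps -> exists N, forall n, (N <= n)%nat -> Cmod (u n - p) < eps) -> P p.
Definition TI g a b c := (Sg g a b + Sg g b c + Sg g c a)%C.
Definition per a b c := Cmod (b - a) + Cmod (c - b) + Cmod (a - c).
Definition mid x y := seg x y (/ 2).

Lemma Cmod_sym x y : Cmod (x - y) = Cmod (y - x).
Proof. replace (x - y)%C with (- (y - x))%C by ring. apply Cmod_opp. Qed.

Lemma Cmod_half x : Cmod (RtoC (/ 2) * x) = Cmod x / 2.
Proof. rewrite Cmod_RtoC_mult, Rabs_right by lra. field. Qed.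

Lemma contsegP P g a b : convex P -> (forall w, P w -> ccont g w) -> P a -> P b -> contseg g a b.
Proof. intros HP Hg Ha Hb t Ht. apply Hg, HP; auto. Qed.

Lemma midP P a b : convex P -> P a -> P b -> P (mid a b).
Proof. intros HP Ha Hb. apply HP; auto. lra. Qed.

Lemma subdiv P g a b c : convex P -> (forall w, P w -> ccont g w) -> P a -> P b -> P c ->
  TI g a b c = (TI g a (mid a b) (mid c a) + TI g (mid a b) b (mid b c)
              + TI g (mid c a) (mid b c) c + TI g (mid a b) (mid b c) (mid c a))%C.
Proof.
  intros HP Hg Ha Hb Hc.
  assert (Hab := midP P a b HP Ha Hb). assert (Hbc := midP P b c HP Hb Hc).
  assert (Hca := midP P c a HP Hc Ha).
  unfold TI.
  rewrite (S_split g a b (/2)) by (try apply (contsegP P); auto; lra).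
  rewrite (S_split g b c (/2)) by (try apply (contsegP P); auto; lra).
  rewrite (S_split g c a (/2)) by (try apply (contsegP P); auto; lra).
  fold (mid a b) (mid b c) (mid c a).
  rewrite (S_rev g (mid a b) (mid c a)) by (apply (contsegP P); auto).
  rewrite (S_rev g (mid a b) (mid b c)) by (apply (contsegP P); auto).
  rewrite (S_rev g (mid c a) (mid b c)) by (apply (contsegP P); auto).
  ring.
Qed.

Record tri := mkT { ta : C; tb : C; tc : C }.
Definition tI g T := TI g (ta T) (tb T) (tc T).
Definition tper T := per (ta T) (tb T) (tc T).
Definition tP (P : C -> Prop) T := P (ta T) /\ P (tb T) /\ P (tc T).
Definition t1 T := mkT (ta T) (mid (ta T) (tb T)) (mid (tc T) (ta T)).
Definition t2 T := mkT (mid (ta T) (tb T)) (tb T) (mid (tb T) (tc T)).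
Definition t3 T := mkT (mid (tc T) (ta T)) (mid (tb T) (tc T)) (tc T).
Definition t4 T := mkT (mid (ta T) (tb T)) (mid (tb T) (tc T)) (mid (tc T) (ta T)).
Definition next g T :=
  if Rle_dec (Cmod (tI g T) / 4) (Cmod (tI g (t1 T))) then t1 T else
  if Rle_dec (Cmod (tI g T) / 4) (Cmod (tI g (t2 T))) then t2 T else
  if Rle_dec (Cmod (tI g T) / 4) (Cmod (tI g (t3 T))) then t3 T else t4 T.

Lemma next_P P g T : convex P -> tP P T -> tP P (next g T).
Proof.
  intros HP [Ha [Hb Hc]].
  assert (Hab := midP P _ _ HP Ha Hb). assert (Hbc := midP P _ _ HP Hb Hc).
  assert (Hca := midP P _ _ HP Hc Ha).
  unfold next; repeat destruct Rle_dec; unfold tP, t1, t2, t3, t4; simpl; auto.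
Qed.

Lemma next_I P g T : convex P -> (forall w, P w -> ccont g w) -> tP P T ->
  Cmod (tI g T) <= 4 * Cmod (tI g (next g T)).
Proof.
  intros HP Hg [Ha [Hb Hc]].
  assert (E : tI g T = (tI g (t1 T) + tI g (t2 T) + tI g (t3 T) + tI g (t4 T))%C).
  { unfold tI. apply (subdiv P); auto. }
  assert (Htr : Cmod (tI g T) <= Cmod (tI g (t1 T)) + Cmod (tI g (t2 T)) + Cmod (tI g (t3 T)) + Cmod (tI g (t4 T))).
  { rewrite E. eapply Rle_trans. apply Cmod_triangle.
    apply Rplus_le_compat_r. eapply Rle_trans. apply Cmod_triangle.
    apply Rplus_le_compat_r. apply Cmod_triangle. }
  unfold next; repeat destruct Rle_dec; lra.
Qed.

Ltac midtac := unfold mid, seg; rewrite (RtoC_inv 2) by lra; field;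
  let H := fresh in intro H; apply (f_equal fst) in H; simpl in H; lra.

Lemma next_per g T : tper (next g T) = tper T / 2.
Proof.
  destruct T as [a b c]. unfold tper, per.
  assert (E1 : forall x y, (mid x y - x)%C = (RtoC (/2) * (y - x))%C) by (intros; unfold mid, seg; ring).
  assert (E2 : forall x y, (y - mid x y)%C = (RtoC (/2) * (y - x))%C) by (intros; unfold mid, seg; rewrite (RtoC_inv 2) by lra; field; intro H; apply (f_equal fst) in H; simpl in H; lra).
  assert (E3 : forall x y z, (mid z x - mid x y)%C = (RtoC (/2) * (z - y))%C) by (intros; unfold mid, seg; rewrite (RtoC_inv 2) by lra; field; intro H; apply (f_equal fst) in H; simpl in H; lra).
  unfold next; repeat destruct Rle_dec; unfold t1, t2, t3, t4; simpl.
  - rewrite E1, E3, E2, !Cmod_half. lra.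
  - rewrite E2, E1, E3, !Cmod_half. lra.
  - rewrite E3, E2, E1, !Cmod_half. lra.
  - replace (mid b c - mid a b)%C with (RtoC (/2) * - (a - c))%C by midtac.
    replace (mid c a - mid b c)%C with (RtoC (/2) * - (b - a))%C by midtac.
    replace (mid a b - mid c a)%C with (RtoC (/2) * - (c - b))%C by midtac.
    rewrite !Cmod_half, !Cmod_opp. lra.
Qed.

Lemma next_a g T : Cmod (ta (next g T) - ta T) <= tper T / 2.
Proof.
  destruct T as [a b c]. unfold tper, per.
  pose proof (Cmod_ge_0 (b - a)). pose proof (Cmod_ge_0 (c - b)). pose proof (Cmod_ge_0 (a - c)).
  assert (E1 : (mid a b - a)%C = (RtoC (/2) * (b - a))%C) by (unfold mid, seg; ring).
  assert (E2 : (mid c a - a)%C = (RtoC (/2) * - (a - c))%C) by midtac.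
  unfold next; repeat destruct Rle_dec; unfold t1, t2, t3, t4; simpl;
    try rewrite E1; try rewrite E2; rewrite ?Cmod_half, ?Cmod_opp; try lra.
  replace (a - a)%C with (RtoC 0) by ring. rewrite Cmod_0. lra.
Qed.

Lemma seg_close x y a r t : Cmod (x - a) <= r -> Cmod (y - a) <= r -> 0 <= t <= 1 ->
  Cmod (seg x y t - a) <= r.
Proof.
  intros Hx Hy Ht.
  replace (seg x y t - a)%C with (RtoC (1 - t) * (x - a) + RtoC t * (y - a))%C
    by (unfold seg; rewrite RtoC_minus; ring).
  eapply Rle_trans. apply Cmod_triangle. rewrite !Cmod_RtoC_mult.
  rewrite !Rabs_right by lra. nra.
Qed.

Lemma Cmod_le_abs z : Cmod z <= Rabs (fst z) + Rabs (snd z).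
Proof.
  destruct z as [x y]. unfold Cmod; simpl.
  rewrite <- (sqrt_Rsqr (Rabs x + Rabs y)) by (pose proof (Rabs_pos x); pose proof (Rabs_pos y); lra).
  apply sqrt_le_1_alt. unfold Rsqr.
  pose proof (Rabs_pos x); pose proof (Rabs_pos y).
  assert (x * x = Rabs x * Rabs x) by (rewrite <- Rabs_mult, Rabs_right; [ring| apply Rle_ge, Rle_0_sqr]).
  assert (y * y = Rabs y * Rabs y) by (rewrite <- Rabs_mult, Rabs_right; [ring| apply Rle_ge, Rle_0_sqr]).
  nra.
Qed.

Lemma q_small (eps : R) : 0 < eps -> exists N, forall n, (N <= n)%nat -> (/2) ^ n < eps.
Proof.
  intros He. destruct (pow_lt_1_zero (/2)) with eps as [N HN]; auto.
  rewrite Rabs_right by lra. lra.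
  exists N. intros n Hn. specialize (HN n Hn). rewrite Rabs_right in HN; auto.
  apply Rle_ge, pow_le. lra.
Qed.

Lemma ccont_affine c0 c1 w : ccont (fun v => c0 + c1 * v)%C w.
Proof.
  apply deriv_ccont with c1. intros eps He. exists 1. split. lra.
  intros v _. replace (c0 + c1 * v - (c0 + c1 * w) - c1 * (v - w))%C with (RtoC 0) by ring.
  rewrite Cmod_0. pose proof (Cmod_ge_0 (v - w)). nra.
Qed.

Lemma fst_le_Cmod z : Rabs (fst z) <= Cmod z.
Proof. eapply Rle_trans; [apply Rmax_l|apply Rmax_Cmod]. Qed.
Lemma snd_le_Cmod z : Rabs (snd z) <= Cmod z.
Proof. eapply Rle_trans; [apply Rmax_r|apply Rmax_Cmod]. Qed.

Lemma ccont_minus f h w : ccont f w -> ccont h w -> ccont (fun v => f v - h v)%C w.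
Proof.
  intros Hf Hh eps He.
  destruct (Hf (eps/2)) as [d1 [Hd1 H1]]. lra.
  destruct (Hh (eps/2)) as [d2 [Hd2 H2]]. lra.
  exists (Rmin d1 d2). split. apply Rmin_pos; auto.
  intros v Hv. specialize (H1 v (Rlt_le_trans _ _ _ Hv (Rmin_l _ _))).
  specialize (H2 v (Rlt_le_trans _ _ _ Hv (Rmin_r _ _))).
  replace (f v - h v - (f w - h w))%C with ((f v - f w) + - (h v - h w))%C by ring.
  eapply Rle_lt_trans. apply Cmod_triangle. rewrite Cmod_opp. lra.
Qed.

Lemma C_limit (u : nat -> C) (L : R) : 0 <= L ->
  (forall n m, (n <= m)%nat -> Cmod (u m - u n) <= L * (/2) ^ n) ->
  exists p : C, forall n, Cmod (u n - p) <= 2 * L * (/2) ^ n.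
Proof.
  intros HL Hu.
  assert (Hc : forall (pr : C -> R), (forall z, Rabs (pr z) <= Cmod z) ->
     (forall x y, pr (x - y)%C = pr x - pr y) ->
     exists l, forall n, Rabs (l - pr (u n)) <= L * (/2) ^ n).
  { intros pr Hpr Hlin.
    assert (HC : Cauchy_crit (fun n => pr (u n))).
    { intros eps He. destruct (q_small (eps / (2 * L + 1))) as [N HN].
      apply Rdiv_lt_0_compat; lra.
      exists N. intros n m Hn Hm. unfold Rdist.
      pose proof (Hu N n Hn). pose proof (Hu N m Hm).
      pose proof (Hpr (u n - u N)%C). pose proof (Hpr (u m - u N)%C).
      rewrite Hlin in H1, H2.
      specialize (HN N (le_n N)).
      assert (HqN : 0 <= (/2) ^ N) by (apply pow_le; lra).
      assert (Rabs (pr (u n) - pr (u m)) <= Rabs (pr (u n) - pr (u N)) + Rabs (pr (u m) - pr (u N))).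
      { replace (pr (u n) - pr (u m)) with ((pr (u n) - pr (u N)) + - (pr (u m) - pr (u N))) by ring.
        eapply Rle_trans. apply Rabs_triang. rewrite Rabs_Ropp. lra. }
      assert ((2 * L + 1) * (/2) ^ N < eps).
      { apply Rmult_lt_reg_r with (/ (2 * L + 1)). apply Rinv_0_lt_compat; lra.
        replace ((2 * L + 1) * (/ 2) ^ N * / (2 * L + 1)) with ((/2) ^ N) by (field; lra).
        exact HN. }
      nra. }
    destruct (Rcomplete.R_complete _ HC) as [l Hl]. exists l.
    intros n. apply Rnot_lt_le. intros Hlt.
    destruct (Hl (Rabs (l - pr (u n)) - L * (/2)^n)) as [N HN]. lra.
    set (m := max N n).
    specialize (HN m (Nat.le_max_l N n)). unfold Rdist in HN.
    pose proof (Hu n m (Nat.le_max_r N n)).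
    pose proof (Hpr (u m - u n)%C). rewrite Hlin in H0.
    assert (Rabs (l - pr (u n)) <= Rabs (pr (u m) - l) + Rabs (pr (u m) - pr (u n))).
    { replace (l - pr (u n)) with (- (pr (u m) - l) + (pr (u m) - pr (u n))) by ring.
      eapply Rle_trans. apply Rabs_triang. rewrite Rabs_Ropp. lra. }
    lra. }
  destruct (Hc fst fst_le_Cmod) as [px Hx]. intros; simpl; ring.
  destruct (Hc snd snd_le_Cmod) as [py Hy]. intros; simpl; ring.
  exists (px, py). intros n. eapply Rle_trans. apply Cmod_le_abs.
  simpl. specialize (Hx n). specialize (Hy n).
  rewrite Rabs_minus_sym in Hx, Hy. unfold Rminus in Hx, Hy. lra.
Qed.

Lemma goursat P g : convex P -> seqclosed P -> (forall w, P w -> exists d, is_cderive g w d) ->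
  forall a b c, P a -> P b -> P c -> TI g a b c = RtoC 0.
Proof.
  intros HP Hcl Hd a b c Ha Hb Hc.
  assert (Hg : forall w, P w -> ccont g w).
  { intros w Hw. destruct (Hd w Hw) as [d Hdd]. apply deriv_ccont with d. apply cderive_eps. exact Hdd. }
  set (T0 := mkT a b c).
  set (Tn := fun n => Nat.iter n (next g) T0).
  set (L := tper T0).
  assert (HL : 0 <= L).
  { unfold L, tper, per. pose proof (Cmod_ge_0 (b - a)). pose proof (Cmod_ge_0 (c - b)).
    pose proof (Cmod_ge_0 (a - c)). simpl. lra. }
  assert (HPn : forall n, tP P (Tn n)).
  { induction n. unfold Tn; simpl. unfold tP; simpl; auto.
    change (Tn (S n)) with (next g (Tn n)). apply next_P; auto. }
  assert (Hper : forall n, tper (Tn n) = L * (/2)^n).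
  { induction n. simpl. unfold L, Tn. simpl. ring.
    change (Tn (S n)) with (next g (Tn n)). rewrite next_per, IHn. simpl. field. }
  assert (HIn : forall n, Cmod (tI g T0) <= 4^n * Cmod (tI g (Tn n))).
  { induction n. simpl. unfold Tn; simpl. lra.
    change (Tn (S n)) with (next g (Tn n)).
    pose proof (next_I P g (Tn n) HP Hg (HPn n)).
    assert (0 <= 4 ^ n) by (apply pow_le; lra). simpl. nra. }
  set (u := fun n => ta (Tn n)).
  assert (Hu1 : forall n, Cmod (u (S n) - u n) <= L * (/2)^n / 2).
  { intros n. unfold u. change (Tn (S n)) with (next g (Tn n)). rewrite <- Hper. apply next_a. }
  assert (Hu : forall n k, Cmod (u (n + k)%nat - u n) <= L * (/2)^n - L * (/2)^(n+k)).
  { intros n k. induction k.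
    rewrite Nat.add_0_r. replace (u n - u n)%C with (RtoC 0) by ring. rewrite Cmod_0. lra.
    rewrite Nat.add_succ_r.
    replace (u (S (n+k)) - u n)%C with ((u (S (n+k)) - u (n+k)%nat) + (u (n+k)%nat - u n))%C by ring.
    eapply Rle_trans. apply Cmod_triangle. specialize (Hu1 (n+k)%nat).
    rewrite <- tech_pow_Rmult. lra. }
  assert (Hu' : forall n m, (n <= m)%nat -> Cmod (u m - u n) <= L * (/2) ^ n).
  { intros n m Hnm. replace m with (n + (m - n))%nat by lia.
    pose proof (Hu n (m - n)%nat). assert (0 <= (/2) ^ (n + (m - n))) by (apply pow_le; lra).
    nra. }
  destruct (C_limit u L HL Hu') as [p Hp].
  assert (HPp : P p).
  { apply (Hcl u p). intros n; apply (HPn n).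
    intros eps He. destruct (q_small (eps / (2 * L + 1))) as [N HN].
    apply Rdiv_lt_0_compat; lra.
    exists N. intros n Hn. specialize (HN n Hn). specialize (Hp n).
    assert ((2 * L + 1) * (/2) ^ n < eps).
    { apply Rmult_lt_reg_r with (/ (2 * L + 1)). apply Rinv_0_lt_compat; lra.
      replace ((2 * L + 1) * (/ 2) ^ n * / (2 * L + 1)) with ((/2) ^ n) by (field; lra).
      exact HN. }
    assert (0 <= (/2) ^ n) by (apply pow_le; lra). nra. }
  destruct (Hd p HPp) as [d Hdp]. apply cderive_eps in Hdp.
  assert (Hmain : forall eps, 0 < eps -> Cmod (tI g T0) <= 3 * eps * (L * L)).
  { intros eps He. destruct (Hdp eps He) as [dl [Hdl Hdw]].
    destruct (q_small (dl / (3 * L + 1))) as [n Hn]. apply Rdiv_lt_0_compat; lra.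
    specialize (Hn n (le_n n)).
    assert (Hqn : 0 <= (/2) ^ n) by (apply pow_le; lra).
    assert (H3 : 3 * L * (/2) ^ n < dl).
    { assert ((3 * L + 1) * (/2) ^ n < dl).
      { apply Rmult_lt_reg_r with (/ (3 * L + 1)). apply Rinv_0_lt_compat; lra.
        replace ((3 * L + 1) * (/ 2) ^ n * / (3 * L + 1)) with ((/2) ^ n) by (field; lra).
        exact Hn. }
      nra. }
    destruct (HPn n) as [Pa [Pb Pc]].
    specialize (Hper n). specialize (Hp n). specialize (HIn n).
    set (qn := (/2) ^ n) in *.
    unfold tper, per in Hper. unfold u in Hp. unfold tI in HIn |- *.
    destruct (Tn n) as [a' b' c']. simpl in *.
    set (c0 := (g p - d * p)%C). set (aff := fun w => (c0 + d * w)%C).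
    set (r := fun w => (g w - aff w)%C).
    assert (Hca : forall x y, contseg aff x y) by (intros x y t _; apply ccont_affine).
    assert (Hcg : forall x y, P x -> P y -> contseg g x y) by (intros; apply (contsegP P); auto).
    assert (Hcr : forall x y, P x -> P y -> contseg r x y).
    { intros x y Hx Hy t Ht. apply ccont_minus. apply Hcg; auto. apply Hca; auto. }
    assert (Hsplit : forall x y, P x -> P y -> Sg g x y = (Sg r x y + Sg aff x y)%C).
    { intros x y Hx Hy. unfold r. rewrite S_minus by auto. ring. }
    assert (Hbd : forall x y, P x -> P y -> Cmod (x - a') <= L * qn -> Cmod (y - a') <= L * qn ->
               Cmod (Sg r x y) <= Cmod (y - x) * (eps * (3 * L * qn))).
    { intros x y Hx Hy Hxa Hya. apply S_bound. apply Hcr; auto.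
      intros t Ht. pose proof (seg_close x y a' (L * qn) t Hxa Hya Ht) as Hw.
      set (w := seg x y t) in *.
      assert (Hwp : Cmod (w - p) <= 3 * L * qn).
      { replace (w - p)%C with ((w - a') + (a' - p))%C by ring.
        eapply Rle_trans. apply Cmod_triangle. lra. }
      specialize (Hdw w ltac:(lra)).
      unfold r, aff, c0.
      replace (g w - (g p - d * p + d * w))%C with (g w - g p - d * (w - p))%C by ring.
      pose proof (Cmod_ge_0 (w - p)). nra. }
    pose proof (Cmod_ge_0 (b' - a')). pose proof (Cmod_ge_0 (c' - b')). pose proof (Cmod_ge_0 (a' - c')).
    assert (Haa : Cmod (a' - a') <= L * qn).
    { replace (a' - a')%C with (RtoC 0) by ring. rewrite Cmod_0. nra. }
    assert (Hba : Cmod (b' - a') <= L * qn) by lra.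
    assert (Hcc : Cmod (c' - a') <= L * qn) by (rewrite Cmod_sym; lra).
    assert (HT : TI g a' b' c' = (Sg r a' b' + Sg r b' c' + Sg r c' a')%C).
    { unfold TI. rewrite !Hsplit by auto. unfold aff. rewrite !S_affine. ring. }
    pose proof (Hbd a' b' Pa Pb Haa Hba). pose proof (Hbd b' c' Pb Pc Hba Hcc).
    pose proof (Hbd c' a' Pc Pa Hcc Haa).
    assert (HTb : Cmod (TI g a' b' c') <= (L * qn) * (eps * (3 * L * qn))).
    { rewrite HT. eapply Rle_trans. apply Cmod_triangle. eapply Rle_trans.
      apply Rplus_le_compat_r. apply Cmod_triangle. rewrite <- Hper. lra. }
    assert (H4q : 4 ^ n * (qn * qn) = 1).
    { unfold qn. rewrite <- Rpow_mult_distr, <- Rpow_mult_distr.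
      replace (4 * (/ 2 * / 2)) with 1 by field. apply pow1. }
    assert (0 <= 4 ^ n) by (apply pow_le; lra).
    eapply Rle_trans. exact HIn.
    apply Rle_trans with (4 ^ n * ((L * qn) * (eps * (3 * L * qn)))).
    apply Rmult_le_compat_l; auto.
    replace (4 ^ n * (L * qn * (eps * (3 * L * qn)))) with (3 * eps * (L * L) * (4 ^ n * (qn * qn))) by ring.
    rewrite H4q. lra. }
  change (TI g a b c) with (tI g T0).
  apply Cmod_eq_0. apply Rle_antisym; [|apply Cmod_ge_0].
  apply Rnot_lt_le. intros HX. set (X := Cmod (tI g T0)) in *.
  specialize (Hmain (X / (6 * (L * L) + 1))).
  assert (0 <= L * L) by nra.
  assert (X * (6 * (L * L) + 1) <= 3 * X * (L * L)).
  { assert (Hm : X <= 3 * (X / (6 * (L * L) + 1)) * (L * L)) by (apply Hmain; apply Rdiv_lt_0_compat; lra).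
    apply Rmult_le_compat_r with (r := 6 * (L * L) + 1) in Hm; [|lra].
    replace (3 * (X / (6 * (L * L) + 1)) * (L * L) * (6 * (L * L) + 1)) with (3 * X * (L * L)) in Hm by (field; lra).
    exact Hm. }
  nra.
Qed.

Lemma Cmod_seg_le a b t : 0 <= t <= 1 -> Cmod (seg a b t) <= (1 - t) * Cmod a + t * Cmod b.
Proof.
  intros Ht. replace (seg a b t) with (RtoC (1 - t) * a + RtoC t * b)%C
    by (unfold seg; rewrite RtoC_minus; ring).
  eapply Rle_trans. apply Cmod_triangle. rewrite !Cmod_RtoC_mult, !Rabs_right by lra. lra.
Qed.

Lemma disc_convex : convex (fun v => Cmod v < 1).
Proof.
  intros a b t Ha Hb Ht. eapply Rle_lt_trans. apply Cmod_seg_le; auto.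
  destruct (Req_dec t 0). subst. lra. nra.
Qed.

Lemma Sg_aa g a : Sg g a a = RtoC 0.
Proof.
  unfold Sg. rewrite (RInt_CR_ext (igd g a a) (fun _ => RtoC 0)).
  rewrite (RInt_const (V:=C_R_CompleteNormedModule)). rewrite scal_CR. ring.
  intros x. unfold igd. ring.
Qed.

Definition KK (z v : C) : R := fst v * fst z + snd v * snd z.

Lemma KK_bound z v : Rabs (KK z v) <= Cmod v * Cmod z.
Proof.
  replace (KK z v) with (Re (v * Cconj z)%C) by (unfold KK, Re, Cconj; simpl; ring).
  rewrite <- Cmod_conj with z. rewrite <- Cmod_mult. apply re_le_Cmod.
Qed.

Lemma KK_seg z a b t : KK z (seg a b t) = (1 - t) * KK z a + t * KK z b.
Proof. unfold KK, seg; simpl. ring. Qed.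

Lemma KK_minus z a b : KK z (a - b)%C = KK z a - KK z b.
Proof. unfold KK; simpl. ring. Qed.

Lemma tri0 (G : C -> C) : (forall v, Cmod v < 1 -> ccont G v) ->
  (forall v, Cmod v < 1 -> v <> RtoC 0 -> exists d, is_cderive G v d) ->
  forall z w, Cmod z < 1 -> Cmod w < 1 -> z <> RtoC 0 -> Cmod (w - z) < Cmod z ->
  TI G (RtoC 0) z w = RtoC 0.
Proof.
  intros Hc Hd z w Hz Hw Hz0 Hwz.
  assert (HcD : forall a b, Cmod a < 1 -> Cmod b < 1 -> contseg G a b)
    by (intros; apply (contsegP (fun v => Cmod v < 1)); auto; apply disc_convex).
  assert (H0D : Cmod (RtoC 0) < 1) by (rewrite Cmod_0; lra).
  destruct (Hc (RtoC 0) H0D 1 Rlt_0_1) as [d0 [Hd0 HB]].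
  set (B := 1 + Cmod (G (RtoC 0))).
  assert (HBv : forall v, Cmod v < d0 -> Cmod (G v) <= B).
  { intros v Hv. assert (Cmod (v - RtoC 0) < d0) by (replace (v - RtoC 0)%C with v by ring; auto).
    specialize (HB v H). replace (G v) with ((G v - G (RtoC 0)) + G (RtoC 0))%C by ring.
    eapply Rle_trans. apply Cmod_triangle. unfold B; lra. }
  assert (HB0 : 0 <= B) by (unfold B; pose proof (Cmod_ge_0 (G (RtoC 0))); lra).
  set (m := Rmin (KK z z) (KK z w)).
  assert (Hzpos : 0 < Cmod z) by (apply Cmod_gt_0; auto).
  assert (HKz : KK z z = Cmod z * Cmod z).
  { unfold KK, Cmod. rewrite sqrt_sqrt. simpl; ring. simpl. nra. }
  assert (HKw : 0 < KK z w).
  { replace w with ((w - z) + z)%C by ring. unfold KK at 1; simpl.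
    pose proof (KK_bound z (w - z)). unfold KK in H; simpl in H.
    assert (Hk : KK z z = fst z * fst z + snd z * snd z) by reflexivity.
    apply Rabs_le_between in H. nra. }
  assert (Hm : 0 < m) by (unfold m; apply Rmin_glb_lt; nra).
  set (r := Rmax (Cmod z) (Cmod w)).
  assert (Hr : r < 1) by (unfold r; apply Rmax_lub_lt; auto).
  assert (Hcut : forall e, 0 < e < 1 -> e < d0 -> Cmod (TI G (RtoC 0) z w) <= 4 * e * B).
  { intros e He Hed.
    set (ez := seg (RtoC 0) z e). set (ew := seg w (RtoC 0) (1 - e)).
    assert (Hez : ez = (RtoC e * z)%C) by (unfold ez, seg; ring).
    assert (Hew : ew = (RtoC e * w)%C) by (unfold ew, seg; rewrite RtoC_minus; ring).
    assert (Hezm : Cmod ez <= e * Cmod z) by (rewrite Hez, Cmod_RtoC_mult, Rabs_right; lra).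
    assert (Hewm : Cmod ew <= e * Cmod w) by (rewrite Hew, Cmod_RtoC_mult, Rabs_right; lra).
    assert (HezD : Cmod ez < 1) by nra. assert (HewD : Cmod ew < 1) by nra.
    set (P := fun v => Cmod v <= r /\ e * m <= KK z v).
    assert (HPc : convex P).
    { intros a b t [Ha1 Ha2] [Hb1 Hb2] Ht. split.
      eapply Rle_trans. apply Cmod_seg_le; auto. nra.
      rewrite KK_seg. nra. }
    assert (HPcl : seqclosed P).
    { intros u p Hu Hlim. split.
      - apply Rnot_lt_le. intros Hlt.
        destruct (Hlim (Cmod p - r)) as [N HN]. lra.
        specialize (HN N (le_n N)). destruct (Hu N) as [Hu1 _].
        assert (Cmod p <= Cmod (u N) + Cmod (u N - p)).
        { replace p with (u N + - (u N - p))%C at 1 by ring.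
          eapply Rle_trans. apply Cmod_triangle. rewrite Cmod_opp. lra. }
        lra.
      - apply Rnot_lt_le. intros Hlt.
        destruct (Hlim ((e * m - KK z p) / (Cmod z + 1))) as [N HN].
        apply Rdiv_lt_0_compat; lra.
        specialize (HN N (le_n N)). destruct (Hu N) as [_ Hu2].
        pose proof (KK_bound z (u N - p)). rewrite KK_minus in H.
        assert (Cmod (u N - p) * (Cmod z + 1) < e * m - KK z p).
        { apply Rmult_lt_reg_r with (/ (Cmod z + 1)). apply Rinv_0_lt_compat; lra.
          rewrite Rmult_assoc, Rinv_r by lra. rewrite Rmult_1_r. exact HN. }
        pose proof (Cmod_ge_0 (u N - p)).
        apply Rabs_le_between in H. nra. }
    assert (HPD : forall v, P v -> Cmod v < 1 /\ v <> RtoC 0).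
    { intros v [Hv1 Hv2]. split. lra. intros E. subst v. unfold KK in Hv2; simpl in Hv2. nra. }
    assert (HPd : forall v, P v -> exists d, is_cderive G v d).
    { intros v Hv. destruct (HPD v Hv). apply Hd; auto. }
    assert (Pez : P ez).
    { split. unfold r. pose proof (Rmax_l (Cmod z) (Cmod w)). nra.
      rewrite Hez. unfold KK in *; simpl. unfold m. pose proof (Rmin_l (KK z z) (KK z w)).
      unfold KK in H. nra. }
    assert (Pew : P ew).
    { split. unfold r. pose proof (Rmax_r (Cmod z) (Cmod w)). pose proof (Cmod_ge_0 w). nra.
      rewrite Hew. unfold KK in *; simpl. unfold m. pose proof (Rmin_r (KK z z) (KK z w)).
      unfold KK in H. nra. }
    assert (Pz : P z).
    { split. apply Rmax_l. unfold m. pose proof (Rmin_l (KK z z) (KK z w)). nra. }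
    assert (Pw : P w).
    { split. apply Rmax_r. unfold m. pose proof (Rmin_r (KK z z) (KK z w)). nra. }
    assert (G1 : TI G ez z w = RtoC 0) by (apply (goursat P); auto).
    assert (G2 : TI G ez w ew = RtoC 0) by (apply (goursat P); auto).
    assert (E : TI G (RtoC 0) z w = (TI G (RtoC 0) ez ew + TI G ez z w + TI G ez w ew)%C).
    { unfold TI.
      rewrite (S_split G (RtoC 0) z e) by (auto; lra). fold ez.
      rewrite (S_split G w (RtoC 0) (1 - e)) by (auto; lra). fold ew.
      rewrite (S_rev G ez ew) by auto. rewrite (S_rev G ez w) by auto. ring. }
    rewrite E, G1, G2.
    replace (TI G (RtoC 0) ez ew + RtoC 0 + RtoC 0)%C with (TI G (RtoC 0) ez ew) by ring.
    assert (Hsm : forall a b, Cmod a <= e -> Cmod b <= e -> Cmod (Sg G a b) <= Cmod (b - a) * B).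
    { intros a b Ha Hb. apply S_bound. apply HcD; lra.
      intros t Ht. apply HBv.
      assert (Cmod (seg a b t - RtoC 0) <= e).
      { apply seg_close; auto.
        replace (a - RtoC 0)%C with a by ring. auto. replace (b - RtoC 0)%C with b by ring. auto. }
      replace (seg a b t) with (seg a b t - RtoC 0)%C by ring. lra. }
    assert (H0e : Cmod (RtoC 0) <= e) by (rewrite Cmod_0; lra).
    assert (Hez' : Cmod ez <= e) by nra. assert (Hew' : Cmod ew <= e) by nra.
    pose proof (Hsm _ _ H0e Hez'). pose proof (Hsm _ _ Hez' Hew'). pose proof (Hsm _ _ Hew' H0e).
    assert (Cmod (ez - RtoC 0) <= e) by (replace (ez - RtoC 0)%C with ez by ring; auto).
    assert (Cmod (ew - ez) <= 2 * e).
    { replace (ew - ez)%C with (ew + - ez)%C by ring. eapply Rle_trans. apply Cmod_triangle.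
      rewrite Cmod_opp. lra. }
    assert (Cmod (RtoC 0 - ew) <= e) by (replace (RtoC 0 - ew)%C with (- ew)%C by ring; rewrite Cmod_opp; auto).
    unfold TI. eapply Rle_trans. apply Cmod_triangle. eapply Rle_trans.
    apply Rplus_le_compat_r. apply Cmod_triangle. nra. }
  apply Cmod_eq_0. apply Rle_antisym; [|apply Cmod_ge_0].
  apply Rnot_lt_le. intros HX. set (X := Cmod (TI G (RtoC 0) z w)) in *.
  set (e := Rmin (/2) (Rmin (d0 / 2) (X / (8 * B + 8)))).
  assert (He0 : 0 < e).
  { unfold e. apply Rmin_pos. lra. apply Rmin_pos. lra. apply Rdiv_lt_0_compat; lra. }
  assert (He1 : e <= /2) by apply Rmin_l.
  assert (He2 : e <= d0 / 2) by (eapply Rle_trans; [apply Rmin_r|apply Rmin_l]).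
  assert (He3 : e <= X / (8 * B + 8)) by (eapply Rle_trans; [apply Rmin_r|apply Rmin_r]).
  specialize (Hcut e ltac:(lra) ltac:(lra)).
  assert (e * (8 * B + 8) <= X).
  { apply Rmult_le_compat_r with (r := 8 * B + 8) in He3; [|lra].
    replace (X / (8 * B + 8) * (8 * B + 8)) with X in He3 by (field; lra). exact He3. }
  nra.
Qed.
Definition is_cder2 (f : C -> C) z l := @is_derive C_AbsRing (AbsRing_NormedModule C_AbsRing) f z l.
Lemma cder2_eps f z l : is_cder2 f z l -> deriv_eps f z l.
Proof.
  intros [_ H] eps Heps.
  specialize (H z (fun P HP => HP) (mkposreal eps Heps)).
  apply (@locally_le_locally_norm C_AbsRing (AbsRing_NormedModule C_AbsRing)) in H. destruct H as [d Hd].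
  exists d; split; [apply cond_pos|]. intros w Hw.
  replace (l * (w - z))%C with ((w - z) * l)%C by ring.
  apply (Hd w). exact Hw.
Qed.
Lemma eps_cder2 f z l : deriv_eps f z l -> is_cder2 f z l.
Proof.
  intros H. split. apply is_linear_scal_l.
  intros x Hx. apply (@is_filter_lim_locally_unique C_AbsRing (AbsRing_NormedModule C_AbsRing)) in Hx. subst x.
  intros [eps Heps]. destruct (H eps Heps) as [d [Hd Hw]].
  apply (@locally_norm_le_locally C_AbsRing (AbsRing_NormedModule C_AbsRing)). exists (mkposreal d Hd).
  intros w Hbw. generalize (Hw w Hbw).
  replace (l * (w - z))%C with ((w - z) * l)%C by ring. exact (fun h => h).
Qed.

Lemma Cmult_integral (x y : C) : (x * y)%C = RtoC 0 -> x = RtoC 0 \/ y = RtoC 0.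
Proof.
  intros E. apply (f_equal Cmod) in E. rewrite Cmod_mult, Cmod_0 in E.
  apply Rmult_integral in E. destruct E as [E|E]; [left|right]; apply Cmod_eq_0; auto.
Qed.

Lemma Cinv_der w : w <> RtoC 0 -> deriv_eps Cinv w (- / (w * w))%C.
Proof.
  intros Hw eps He.
  assert (HA : 0 < Cmod w) by (apply Cmod_gt_0; auto).
  set (A := Cmod w) in *.
  exists (Rmin (A / 2) (eps * (A * A * A) / 2)). split.
  { apply Rmin_pos. lra. apply Rdiv_lt_0_compat; [|lra]. apply Rmult_lt_0_compat; [lra|]. apply Rmult_lt_0_compat; [|lra]. apply Rmult_lt_0_compat; lra. }
  intros v Hv.
  assert (Hv1 : Cmod (v - w) < A / 2) by (eapply Rlt_le_trans; [exact Hv|apply Rmin_l]).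
  assert (Hv2 : Cmod (v - w) < eps * (A * A * A) / 2) by (eapply Rlt_le_trans; [exact Hv|apply Rmin_r]).
  assert (HV : A / 2 <= Cmod v).
  { assert (A <= Cmod v + Cmod (w - v)).
    { unfold A. replace w with (v + (w - v))%C at 1 by ring. apply Cmod_triangle. }
    rewrite Cmod_sym in H. lra. }
  assert (Hv0 : v <> RtoC 0) by (intro E; subst v; rewrite Cmod_0 in HV; lra).
  replace (/ v - / w - - / (w * w) * (v - w))%C with ((v - w) * (v - w) / (v * (w * w)))%C
    by (field; auto).
  rewrite Cmod_div. rewrite !Cmod_mult. fold A.
  set (x := Cmod (v - w)). set (V := Cmod v).
  assert (0 <= x) by apply Cmod_ge_0.
  assert (HV' : A / 2 <= V) by exact HV.
  assert (HDp : 0 < V * (A * A)) by (apply Rmult_lt_0_compat; [lra| apply Rmult_lt_0_compat; lra]).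
  unfold Rdiv. apply Rmult_le_reg_r with (V * (A * A)); auto.
  rewrite Rmult_assoc, Rinv_l by lra. rewrite Rmult_1_r.
  assert (Hx : x <= eps * (A * A * A) / 2) by (unfold x; lra).
  assert (x * x <= x * (eps * (A * A * A) / 2)) by (apply Rmult_le_compat_l; lra).
  assert (A * A * A / 2 <= V * (A * A)).
  { replace (A * A * A / 2) with ((A / 2) * (A * A)) by field. apply Rmult_le_compat_r; nra. }
  assert (eps * (A * A * A) / 2 <= eps * V * (A * A)).
  { replace (eps * (A * A * A) / 2) with (eps * (A * A * A / 2)) by field.
    replace (eps * V * (A * A)) with (eps * (V * (A * A))) by ring. apply Rmult_le_compat_l; lra. }
  assert (x * (eps * (A * A * A) / 2) <= x * (eps * V * (A * A))) by (apply Rmult_le_compat_l; lra).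
  lra.
  intro E. apply Cmult_integral in E. destruct E as [E|E]. auto.
  apply Cmult_integral in E. destruct E; auto.
Qed.

Definition gq (f : C -> C) (w : C) : C := Cdiv (f w) (Cmult w (Cminus (RtoC 1) w)).

Lemma gq_der f w d : is_cderive f w d -> w <> RtoC 0 -> w <> RtoC 1 -> exists l, deriv_eps (gq f) w l.
Proof.
  intros Hf Hw0 Hw1.
  assert (Hf2 : is_cder2 f w d) by (apply eps_cder2, cderive_eps, Hf).
  set (h := fun v : C => Cmult v (Cminus (RtoC 1) v)).
  assert (Hh0 : h w <> RtoC 0).
  { unfold h. intro E. apply Cmult_integral in E. destruct E as [E|E]. auto.
    apply Hw1. replace w with (RtoC 1 - (RtoC 1 - w))%C by ring. rewrite E. ring. }
  assert (Hh : is_cder2 h w (mult one (Cminus (RtoC 1) w) + mult w (minus zero one))%C).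
  { unfold is_cder2, h. apply (is_derive_mult (K:=C_AbsRing) (fun v => v) (fun v => Cminus (RtoC 1) v)).
    apply (is_derive_id (K:=C_AbsRing)).
    apply (is_derive_minus (K:=C_AbsRing) (V:=AbsRing_NormedModule C_AbsRing) (fun _ => RtoC 1) (fun v => v)).
    apply (is_derive_const (K:=C_AbsRing) (V:=AbsRing_NormedModule C_AbsRing)).
    apply (is_derive_id (K:=C_AbsRing)).
    intros; apply Cmult_comm. }
  assert (Hi : is_cder2 Cinv (h w) (- / (h w * h w))%C) by (apply eps_cder2, Cinv_der; auto).
  assert (Hc := is_derive_comp (K:=C_AbsRing) (V:=AbsRing_NormedModule C_AbsRing) Cinv h w _ _ Hi Hh).
  assert (Hm := is_derive_mult (K:=C_AbsRing) f (fun x => Cinv (h x)) w _ _ Hf2 Hc ltac:(intros; apply Cmult_comm)).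
  eexists. apply cder2_eps. unfold is_cder2.
  eapply (is_derive_ext (K:=C_AbsRing) (V:=AbsRing_NormedModule C_AbsRing)); [|exact Hm].
  intros t. reflexivity.
Qed.

Definition Gf (f : C -> C) (d0 : C) (w : C) : C := if Ceq_dec w (RtoC 0) then d0 else gq f w.

Lemma Gf_der f d0 w : (forall v, Cmod v < 1 -> exists d, is_cderive f v d) -> Cmod w < 1 -> w <> RtoC 0 ->
  exists l, is_cderive (Gf f d0) w l.
Proof.
  intros Hf Hw Hw0.
  assert (Hw1 : w <> RtoC 1) by (intro E; subst w; rewrite Cmod_1 in Hw; lra).
  destruct (Hf w Hw) as [d Hd]. destruct (gq_der f w d Hd Hw0 Hw1) as [l Hl].
  exists l. apply eps_cderive. intros eps He. destruct (Hl eps He) as [dl [Hdl Hv]].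
  assert (HA : 0 < Cmod w) by (apply Cmod_gt_0; auto).
  exists (Rmin dl (Cmod w)). split. apply Rmin_pos; auto.
  intros v Hvw. unfold Gf. destruct (Ceq_dec w (RtoC 0)) as [E|_]. contradiction.
  destruct (Ceq_dec v (RtoC 0)) as [E|_].
  { subst v. exfalso. pose proof (Rmin_r dl (Cmod w)).
    replace (RtoC 0 - w)%C with (- w)%C in Hvw by ring. rewrite Cmod_opp in Hvw. lra. }
  apply Hv. eapply Rlt_le_trans; [exact Hvw|apply Rmin_l].
Qed.

Lemma ccont_const c w : ccont (fun _ => c) w.
Proof. intros eps He. exists 1. split. lra. intros. replace (c - c)%C with (RtoC 0) by ring. rewrite Cmod_0. lra. Qed.

Lemma Gf_cont0 f d0 : f (RtoC 0) = RtoC 0 -> is_cderive f (RtoC 0) d0 -> ccont (Gf f d0) (RtoC 0).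
Proof.
  intros Hf0 Hd eps He. apply cderive_eps in Hd.
  destruct (Hd (eps / 8)) as [d1 [Hd1 H1]]. lra.
  set (K := Cmod d0 + 1). assert (HK : 0 < K) by (unfold K; pose proof (Cmod_ge_0 d0); lra).
  exists (Rmin d1 (Rmin (/2) (eps / (8 * K)))). split.
  { apply Rmin_pos; auto. apply Rmin_pos. lra. apply Rdiv_lt_0_compat; lra. }
  intros v Hv.
  assert (Hva : Cmod (v - RtoC 0) < d1) by (eapply Rlt_le_trans; [exact Hv|apply Rmin_l]).
  assert (Hvb : Cmod (v - RtoC 0) < /2) by (eapply Rlt_le_trans; [exact Hv|eapply Rle_trans; [apply Rmin_r|apply Rmin_l]]).
  assert (Hvc : Cmod (v - RtoC 0) < eps / (8 * K)) by (eapply Rlt_le_trans; [exact Hv|eapply Rle_trans; [apply Rmin_r|apply Rmin_r]]).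
  replace (v - RtoC 0)%C with v in Hva, Hvb, Hvc by ring.
  unfold Gf. destruct (Ceq_dec (RtoC 0) (RtoC 0)) as [_|C0]; [|now contradiction C0].
  destruct (Ceq_dec v (RtoC 0)) as [E|Hv0].
  { replace (d0 - d0)%C with (RtoC 0) by ring. rewrite Cmod_0. lra. }
  assert (Hx : 0 < Cmod v) by (apply Cmod_gt_0; auto).
  assert (Hy : /2 <= Cmod (RtoC 1 - v)).
  { assert (Cmod (RtoC 1) <= Cmod (RtoC 1 - v) + Cmod v).
    { replace (RtoC 1) with ((RtoC 1 - v) + v)%C at 1 by ring. apply Cmod_triangle. }
    rewrite Cmod_1 in H. lra. }
  assert (H1v : (RtoC 1 - v)%C <> RtoC 0) by (intro E; rewrite E, Cmod_0 in Hy; lra).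
  specialize (H1 v). replace (v - RtoC 0)%C with v in H1 by ring. specialize (H1 Hva).
  rewrite Hf0 in H1.
  unfold gq.
  replace (f v / (v * (RtoC 1 - v)) - d0)%C with ((f v - RtoC 0 - d0 * v + d0 * v * v) / (v * (RtoC 1 - v)))%C
    by (field; auto).
  rewrite Cmod_div by (intro E; apply Cmult_integral in E; destruct E; auto).
  rewrite Cmod_mult.
  assert (HN : Cmod (f v - RtoC 0 - d0 * v + d0 * v * v) <= eps / 8 * Cmod v + Cmod d0 * Cmod v * Cmod v).
  { eapply Rle_trans. apply Cmod_triangle. rewrite !Cmod_mult. lra. }
  set (x := Cmod v) in *. set (y := Cmod (RtoC 1 - v)) in *.
  assert (Hdx : Cmod d0 * x <= eps / 8).
  { assert (K * x <= eps / 8).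
    { assert (x * (8 * K) <= eps).
      { apply Rmult_lt_compat_r with (r := 8 * K) in Hvc; [|lra].
        replace (eps / (8 * K) * (8 * K)) with eps in Hvc by (field; lra). lra. }
      lra. }
    unfold K in H. nra. }
  unfold Rdiv. apply Rmult_lt_reg_r with (x * y). nra.
  rewrite Rmult_assoc, Rinv_l by nra. rewrite Rmult_1_r.
  assert (Cmod d0 * x * x <= eps / 8 * x) by (apply Rmult_le_compat_r; lra).
  assert (eps * x * / 2 <= eps * x * y) by (apply Rmult_le_compat_l; nra).
  assert (0 < eps * x) by nra.
  lra.
Qed.

Lemma Gf_cont f d0 : (forall v, Cmod v < 1 -> exists d, is_cderive f v d) ->
  f (RtoC 0) = RtoC 0 -> is_cderive f (RtoC 0) d0 ->
  forall w, Cmod w < 1 -> ccont (Gf f d0) w.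
Proof.
  intros Hf Hf0 Hd w Hw. destruct (Ceq_dec w (RtoC 0)) as [E|E].
  subst. apply Gf_cont0; auto.
  destruct (Gf_der f d0 w Hf Hw E) as [l Hl]. apply deriv_ccont with l. apply cderive_eps; auto.
Qed.

Lemma RInt_CR_ext' (f h : R -> C) a b : (forall x, Rmin a b < x < Rmax a b -> f x = h x) ->
  RInt (V:=C_R_CompleteNormedModule) f a b = RInt (V:=C_R_CompleteNormedModule) h a b.
Proof. intros H. apply (RInt_ext (V:=C_R_CompleteNormedModule)). exact H. Qed.

Lemma cesaro_eq f d0 z : cesaro1 f z = Sg (Gf f d0) (RtoC 0) z.
Proof.
  unfold cesaro1, Sg. apply RInt_CR_ext'. intros t Ht.
  rewrite Rmin_left, Rmax_right in Ht by lra. cbv beta zeta. unfold igd, seg.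
  destruct (Ceq_dec z (RtoC 0)) as [E|E].
  { subst z. ring. }
  replace (RtoC 0 + RtoC t * (z - RtoC 0))%C with (RtoC t * z)%C by ring.
  unfold Gf. destruct (Ceq_dec (RtoC t * z) (RtoC 0)) as [E2|E2].
  { apply Cmult_integral in E2. destruct E2 as [E2|E2]; [|contradiction].
    apply (f_equal fst) in E2. simpl in E2. lra. }
  unfold gq. f_equal. ring.
Qed.

Lemma Ceq_from_sum (a b c : C) : (a + b + - c)%C = RtoC 0 -> c = (a + b)%C.
Proof. intros H. replace c with ((a + b) - (a + b + - c))%C by ring. rewrite H. ring. Qed.

Lemma cesaro_deriv f d0 : (forall v, Cmod v < 1 -> exists d, is_cderive f v d) ->
  f (RtoC 0) = RtoC 0 -> is_cderive f (RtoC 0) d0 ->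
  forall z, Cmod z < 1 -> is_cderive (cesaro1 f) z (Gf f d0 z).
Proof.
  intros Hf Hf0 Hd z Hz.
  set (G := Gf f d0).
  assert (HGc : forall v, Cmod v < 1 -> ccont G v) by (apply Gf_cont; auto).
  assert (HGd : forall v, Cmod v < 1 -> v <> RtoC 0 -> exists d, is_cderive G v d)
    by (intros; apply Gf_der; auto).
  assert (HcD : forall a b, Cmod a < 1 -> Cmod b < 1 -> contseg G a b)
    by (intros; apply (contsegP (fun v => Cmod v < 1)); auto; apply disc_convex).
  assert (H0D : Cmod (RtoC 0) < 1) by (rewrite Cmod_0; lra).
  assert (Hd2 : exists d2, 0 < d2 /\ forall w, Cmod (w - z) < d2 -> Cmod w < 1 /\ TI G (RtoC 0) z w = RtoC 0).
  { destruct (Ceq_dec z (RtoC 0)) as [E|E].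
    - subst z. exists 1. split. lra. intros w Hw. replace (w - RtoC 0)%C with w in Hw by ring.
      split; auto. unfold TI. rewrite Sg_aa. rewrite (S_rev G (RtoC 0) w) by auto. ring.
    - assert (Hzp : 0 < Cmod z) by (apply Cmod_gt_0; auto).
      exists (Rmin (1 - Cmod z) (Cmod z)). split. apply Rmin_pos; lra.
      intros w Hw. assert (Hw1 : Cmod (w - z) < 1 - Cmod z) by (eapply Rlt_le_trans; [exact Hw|apply Rmin_l]).
      assert (Hw2 : Cmod (w - z) < Cmod z) by (eapply Rlt_le_trans; [exact Hw|apply Rmin_r]).
      assert (HwD : Cmod w < 1).
      { replace w with ((w - z) + z)%C by ring. eapply Rle_lt_trans. apply Cmod_triangle. lra. }
      split; auto. apply tri0; auto. }
  destruct Hd2 as [d2 [Hd2p Hd2]].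
  apply eps_cderive. intros eps He.
  destruct (HGc z Hz eps He) as [d1 [Hd1 H1]].
  exists (Rmin d1 d2). split. apply Rmin_pos; auto.
  intros w Hw. assert (Hwa : Cmod (w - z) < d1) by (eapply Rlt_le_trans; [exact Hw|apply Rmin_l]).
  assert (Hwb : Cmod (w - z) < d2) by (eapply Rlt_le_trans; [exact Hw|apply Rmin_r]).
  destruct (Hd2 w Hwb) as [HwD HT].
  rewrite (cesaro_eq f d0 w), (cesaro_eq f d0 z). fold G.
  unfold TI in HT. rewrite (S_rev G (RtoC 0) w) in HT by auto.
  apply Ceq_from_sum in HT. rewrite HT.
  replace (Sg G (RtoC 0) z + Sg G z w - Sg G (RtoC 0) z - G z * (w - z))%C with (Sg G z w - G z * (w - z))%C
    by ring.
  rewrite <- (S_const (G z) z w).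
  rewrite <- S_minus by (auto; intros t _; apply ccont_const).
  rewrite Rmult_comm. apply S_bound.
  { intros t Ht. apply ccont_minus. apply HcD; auto. apply ccont_const. }
  intros t Ht. apply Rlt_le. apply H1.
  replace (seg z w t - z)%C with (seg z w t - seg z w 0)%C by (unfold seg; ring).
  rewrite seg_diff, Cmod_RtoC_mult. pose proof (Cmod_ge_0 (w - z)).
  rewrite Rabs_right by lra. nra.
Qed.

Lemma unit_dir (u : C) : exists c : C, Cmod c <= 1 /\ Re (c * u) = Cmod u.
Proof.
  destruct (Ceq_dec u (RtoC 0)) as [E|E].
  - exists (RtoC 0). subst. rewrite Cmod_0. split. lra. unfold Re; simpl. ring.
  - assert (Hu : 0 < Cmod u) by (apply Cmod_gt_0; auto).
    exists (Cconj u / RtoC (Cmod u))%C. split.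
    + rewrite Cmod_div, Cmod_conj, Cmod_R, Rabs_right by (try lra; intro H; apply (f_equal fst) in H; simpl in H; lra).
      right. field. lra.
    + replace (Cconj u / RtoC (Cmod u) * u)%C with ((u * Cconj u) / RtoC (Cmod u))%C
        by (field; intro H; apply (f_equal fst) in H; simpl in H; lra).
      rewrite <- Cmod2_conj.
      replace (RtoC (Cmod u ^ 2) / RtoC (Cmod u))%C with (RtoC (Cmod u)).
      reflexivity.
      rewrite RtoC_pow. field. intro H; apply (f_equal fst) in H; simpl in H; lra.
Qed.

Lemma Re_lin (x y w : C) (h : R) : Re (x - y - RtoC h * w)%C = Re x - Re y - h * Re w.
Proof. unfold Re; simpl. ring. Qed.

Lemma re_deriv f z c t d : is_cderive f (RtoC t * z)%C d ->
  derivable_pt_lim (fun s => Re (c * (f (RtoC s * z) - f (RtoC 0)))%C) t (Re (c * (d * z))%C).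
Proof.
  intros Hd eps He. apply cderive_eps in Hd.
  set (K := (Cmod c + 1) * (Cmod z + 1)).
  assert (HK : 0 < K) by (unfold K; pose proof (Cmod_ge_0 c); pose proof (Cmod_ge_0 z); nra).
  destruct (Hd (eps / (2 * K))) as [dl [Hdl Hw]]. apply Rdiv_lt_0_compat; lra.
  assert (Hdl' : 0 < dl / (Cmod z + 1)) by (apply Rdiv_lt_0_compat; pose proof (Cmod_ge_0 z); lra).
  exists (mkposreal _ Hdl'). intros h Hh0 Hh. simpl in Hh.
  set (w := (RtoC (t + h) * z)%C).
  assert (Hwz : (w - RtoC t * z)%C = (RtoC h * z)%C) by (unfold w; rewrite RtoC_plus; ring).
  assert (Hcm : Cmod (w - RtoC t * z) = Rabs h * Cmod z) by (rewrite Hwz, Cmod_RtoC_mult; auto).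
  pose proof (Cmod_ge_0 z) as Hz0. pose proof (Cmod_ge_0 c) as Hc0.
  assert (Hlt : Cmod (w - RtoC t * z) < dl).
  { rewrite Hcm. apply Rle_lt_trans with (Rabs h * (Cmod z + 1)). pose proof (Rabs_pos h). nra.
    apply Rmult_lt_reg_r with (/ (Cmod z + 1)). apply Rinv_0_lt_compat; lra.
    rewrite Rmult_assoc, Rinv_r by lra. rewrite Rmult_1_r. exact Hh. }
  specialize (Hw w Hlt).
  assert (E : Re (c * (f w - f (RtoC 0)))%C - Re (c * (f (RtoC t * z) - f (RtoC 0)))%C - h * Re (c * (d * z))%C
            = Re (c * (f w - f (RtoC t * z) - d * (w - RtoC t * z)))%C).
  { rewrite <- Re_lin. f_equal. rewrite Hwz. ring. }
  assert (HB : Rabs (Re (c * (f w - f (RtoC t * z) - d * (w - RtoC t * z)))%C) <= (Cmod c + 1) * (eps / (2 * K) * (Rabs h * Cmod z))).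
  { eapply Rle_trans. apply re_le_Cmod. rewrite Cmod_mult. rewrite Hcm in Hw.
    apply Rmult_le_compat; try apply Cmod_ge_0; try lra. }
  replace ((Re (c * (f w - f (RtoC 0)))%C - Re (c * (f (RtoC t * z) - f (RtoC 0)))%C) / h - Re (c * (d * z))%C)
    with ((Re (c * (f w - f (RtoC 0)))%C - Re (c * (f (RtoC t * z) - f (RtoC 0)))%C - h * Re (c * (d * z))%C) / h)
    by (field; auto).
  rewrite E. unfold Rdiv. rewrite Rabs_mult, Rabs_inv.
  assert (Hh1 : 0 < Rabs h) by (apply Rabs_pos_lt; auto).
  apply Rmult_lt_reg_r with (Rabs h). auto.
  rewrite Rmult_assoc, Rinv_l by lra. rewrite Rmult_1_r.
  eapply Rle_lt_trans. exact HB.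
  assert ((Cmod c + 1) * (eps / (2 * K) * (Rabs h * Cmod z)) = eps / 2 * Rabs h * (Cmod z / (Cmod z + 1)))
    by (unfold K; field; lra).
  rewrite H.
  assert (Cmod z / (Cmod z + 1) < 1).
  { apply Rmult_lt_reg_r with (Cmod z + 1). lra. unfold Rdiv. rewrite Rmult_assoc, Rinv_l by lra. lra. }
  assert (0 <= Cmod z / (Cmod z + 1)) by (apply Rdiv_le_0_compat; lra).
  assert (0 < eps / 2 * Rabs h) by (apply Rmult_lt_0_compat; lra).
  apply Rlt_le_trans with (eps / 2 * Rabs h * 1).
  apply Rmult_lt_compat_l; auto. lra.
Qed.

Lemma growth f z psi dpsi : (forall v, Cmod v < 1 -> exists d, is_cderive f v d) -> Cmod z < 1 ->
  (forall t, 0 <= t <= 1 -> derivable_pt_lim psi t (dpsi t)) ->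
  (forall t d, 0 <= t <= 1 -> is_cderive f (RtoC t * z)%C d -> Cmod d * Cmod z <= dpsi t) ->
  Cmod (f z - f (RtoC 0)) <= psi 1 - psi 0.
Proof.
  intros Hf Hz Hpsi Hb.
  destruct (unit_dir (f z - f (RtoC 0))%C) as [c [Hc Hcu]].
  set (h := fun s => Re (c * (f (RtoC s * z) - f (RtoC 0)))%C - psi s).
  set (dh := fun s => Re (c * (C_derive f (RtoC s * z) * z))%C - dpsi s).
  assert (Hin : forall t, 0 <= t <= 1 -> Cmod (RtoC t * z) < 1).
  { intros t Ht. rewrite Cmod_RtoC_mult, Rabs_right by lra. pose proof (Cmod_ge_0 z). nra. }
  assert (Hder : forall t, 0 <= t <= 1 -> derivable_pt_lim h t (dh t)).
  { intros t Ht. destruct (Hf _ (Hin t Ht)) as [d Hd].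
    unfold dh. rewrite (is_C_derive_unique _ _ _ Hd).
    apply (derivable_pt_lim_minus (fun s => Re (c * (f (RtoC s * z) - f (RtoC 0)))%C) psi).
    apply re_deriv; auto. apply Hpsi; auto. }
  destruct (MVT_cor2 h dh 0 1 Rlt_0_1 Hder) as [xi [Hxi Hxi2]].
  assert (Hdh : dh xi <= 0).
  { destruct (Hf _ (Hin xi ltac:(lra))) as [d Hd].
    unfold dh. rewrite (is_C_derive_unique _ _ _ Hd).
    specialize (Hb xi d ltac:(lra) Hd).
    assert (Re (c * (d * z))%C <= Cmod d * Cmod z).
    { eapply Rle_trans. apply Rle_abs. eapply Rle_trans. apply re_le_Cmod.
      rewrite !Cmod_mult. pose proof (Cmod_ge_0 c). pose proof (Cmod_ge_0 d). pose proof (Cmod_ge_0 z).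
      assert (0 <= Cmod d * Cmod z) by nra. nra. }
    lra. }
  unfold h in Hxi. replace (RtoC 1 * z)%C with z in Hxi by ring.
  replace (RtoC 0 * z)%C with (RtoC 0) in Hxi by ring.
  replace (f (RtoC 0) - f (RtoC 0))%C with (RtoC 0) in Hxi by ring.
  rewrite Hcu in Hxi. replace (c * RtoC 0)%C with (RtoC 0) in Hxi by ring.
  unfold Re in Hxi. simpl in Hxi. lra.
Qed.

Lemma is_RInt_Cmult (phi : R -> C) (a : C) x y l :
  is_RInt (V:=C_R_NormedModule) phi x y l ->
  is_RInt (V:=C_R_NormedModule) (fun t => (a * phi t)%C) x y (a * l)%C.
Proof.
  intros H.
  assert (H1 : is_RInt (V:=R_NormedModule) (fun t => fst (phi t)) x y (fst l))
    by (apply (is_RInt_fct_extend_fst (U:=R_NormedModule) (V:=R_NormedModule)); exact H).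
  assert (H2 : is_RInt (V:=R_NormedModule) (fun t => snd (phi t)) x y (snd l))
    by (apply (is_RInt_fct_extend_snd (U:=R_NormedModule) (V:=R_NormedModule)); exact H).
  destruct a as [ar ai]. destruct l as [l1 l2].
  apply (is_RInt_fct_extend_pair (U:=R_NormedModule) (V:=R_NormedModule)); simpl.
  - apply (is_RInt_ext (V:=R_NormedModule) (fun t => minus (scal ar (fst (phi t))) (scal ai (snd (phi t))))).
    intros t _. unfold minus, plus, opp, scal; simpl. unfold mult; simpl. ring.
    replace (ar * l1 - ai * l2) with (minus (scal ar l1) (scal ai l2)).
    apply (is_RInt_minus (V:=R_NormedModule)); apply (is_RInt_scal (V:=R_NormedModule)); auto.
    unfold minus, plus, opp, scal; simpl. unfold mult; simpl. ring.
  - apply (is_RInt_ext (V:=R_NormedModule) (fun t => plus (scal ar (snd (phi t))) (scal ai (fst (phi t))))).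
    intros t _. unfold plus, scal; simpl. unfold mult; simpl. ring.
    replace (ar * l2 + ai * l1) with (plus (scal ar l2) (scal ai l1)).
    apply (is_RInt_plus (V:=R_NormedModule)); apply (is_RInt_scal (V:=R_NormedModule)); auto.
    unfold plus, scal; simpl. unfold mult; simpl. ring.
Qed.

Lemma Rpower_pos x y : 0 < Rpower x y.
Proof. unfold Rpower. apply exp_pos. Qed.

Lemma Rpower_1_base y : Rpower 1 y = 1.
Proof. unfold Rpower. rewrite ln_1, Rmult_0_r. apply exp_0. Qed.

Lemma deriv_cond alpha f M z t d : 0 <= alpha -> bloch_bound alpha f M -> Cmod z < 1 -> 0 <= t <= 1 ->
  is_cderive f (RtoC t * z)%C d -> Rpower (1 - t * Cmod z) alpha * Cmod d <= M.
Proof.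
  intros Ha HM Hz Ht Hd. pose proof (Cmod_ge_0 z).
  assert (Htz : Cmod (RtoC t * z) = t * Cmod z) by (rewrite Cmod_RtoC_mult, Rabs_right; lra).
  assert (Hlt : Cmod (RtoC t * z) < 1) by (rewrite Htz; nra).
  specialize (HM _ _ Hlt Hd). rewrite Htz in HM.
  eapply Rle_trans; [|exact HM]. apply Rmult_le_compat_r. apply Cmod_ge_0.
  assert (Hx : 0 <= t * Cmod z < 1) by (split; nra). apply Rle_Rpower_l; auto. split. nra. simpl. nra.
Qed.

Lemma f_crude alpha f M z : 0 <= alpha -> (forall v, Cmod v < 1 -> exists d, is_cderive f v d) ->
  f (RtoC 0) = RtoC 0 -> bloch_bound alpha f M -> Cmod z < 1 ->
  Cmod (f z) * Rpower (1 - Cmod z) alpha <= Cmod z * M.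
Proof.
  intros Ha Hf Hf0 HM Hz. pose proof (Cmod_ge_0 z) as Hz0.
  set (P1 := Rpower (1 - Cmod z) alpha). assert (HP1 : 0 < P1) by apply Rpower_pos.
  set (A := Cmod z * M / P1).
  assert (G := growth f z (fun t => t * A) (fun _ => A) Hf Hz).
  rewrite Hf0 in G. replace (f z - RtoC 0)%C with (f z) in G by ring.
  assert (Cmod (f z) <= 1 * A - 0 * A).
  { apply G.
    - intros t _. apply is_derive_Reals. auto_derive; [trivial|ring].
    - intros t d Ht Hd. pose proof (deriv_cond alpha f M z t d Ha HM Hz Ht Hd).
      assert (P1 <= Rpower (1 - t * Cmod z) alpha) by (apply Rle_Rpower_l; auto; split; nra).
      assert (P1 * Cmod d <= M) by (pose proof (Cmod_ge_0 d); nra).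
      unfold A. unfold Rdiv. apply Rmult_le_reg_r with P1; auto.
      rewrite (Rmult_assoc (Cmod z * M)), Rinv_l by lra. nra. }
  unfold A in H. apply Rmult_le_compat_r with (r := P1) in H; [|lra].
  replace ((1 * (Cmod z * M / P1) - 0 * (Cmod z * M / P1)) * P1) with (Cmod z * M) in H by (field; lra).
  exact H.
Qed.

Lemma f_sharp alpha f M z : 1 < alpha -> 0 <= M -> (forall v, Cmod v < 1 -> exists d, is_cderive f v d) ->
  f (RtoC 0) = RtoC 0 -> bloch_bound alpha f M -> Cmod z < 1 ->
  Cmod (f z) * (alpha - 1) <= M * Rpower (1 - Cmod z) (1 - alpha).
Proof.
  intros Ha HM0 Hf Hf0 HM Hz. pose proof (Cmod_ge_0 z) as Hz0. set (rho := Cmod z) in *.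
  set (psi := fun t => M / (alpha - 1) * Rpower (1 - t * rho) (1 - alpha)).
  set (dpsi := fun t => M * rho * Rpower (1 - t * rho) (- alpha)).
  assert (G := growth f z psi dpsi Hf Hz).
  rewrite Hf0 in G. replace (f z - RtoC 0)%C with (f z) in G by ring.
  assert (Cmod (f z) <= psi 1 - psi 0).
  { apply G.
    - intros t Ht.
      assert (H1 : derivable_pt_lim (fun s => 1 - s * rho) t (- rho)).
      { apply is_derive_Reals. auto_derive; [trivial|ring]. }
      assert (Hpos : 0 < 1 - t * rho) by nra.
      pose proof (derivable_pt_lim_power (1 - t * rho) (1 - alpha) Hpos) as H2.
      pose proof (derivable_pt_lim_comp _ (fun x => Rpower x (1 - alpha)) t _ _ H1 H2) as H3.
      pose proof (derivable_pt_lim_scal _ (M / (alpha - 1)) t _ H3) as H4.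
      unfold dpsi. replace (M * rho * Rpower (1 - t * rho) (- alpha))
        with (M / (alpha - 1) * ((1 - alpha) * Rpower (1 - t * rho) (1 - alpha - 1) * - rho)).
      exact H4.
      replace (1 - alpha - 1) with (- alpha) by ring. field. lra.
    - intros t d Ht Hd. pose proof (deriv_cond alpha f M z t d ltac:(lra) HM Hz Ht Hd) as Hdc.
      change (Cmod z) with rho in Hdc. unfold dpsi. rewrite Rpower_Ropp.
      set (Q := Rpower (1 - t * rho) alpha) in *. assert (HQ : 0 < Q) by apply Rpower_pos.
      assert (Cmod d <= M * / Q).
      { apply Rmult_le_reg_l with Q; auto. rewrite <- Rmult_assoc, (Rmult_comm Q M), Rmult_assoc, Rinv_r by lra. lra. }
      replace (M * rho * / Q) with (M * / Q * rho) by ring.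
      apply Rmult_le_compat_r; auto. }
  unfold psi in H. replace (1 - 1 * rho) with (1 - rho) in H by ring.
  replace (1 - 0 * rho) with 1 in H by ring. rewrite Rpower_1_base in H.
  assert (0 <= M / (alpha - 1)) by (apply Rdiv_le_0_compat; lra).
  assert (Cmod (f z) <= M / (alpha - 1) * Rpower (1 - rho) (1 - alpha)) by nra.
  apply Rmult_le_compat_r with (r := alpha - 1) in H1; [|lra].
  replace (M / (alpha - 1) * Rpower (1 - rho) (1 - alpha) * (alpha - 1)) with (M * Rpower (1 - rho) (1 - alpha)) in H1 by (field; lra).
  exact H1.
Qed.

Lemma cesaro_pt f d0 z t : 0 < t ->
  (fun t : R => let w := Cmult (RtoC t) z in
     Cmult (Cdiv (f w) (Cmult w (Cminus (RtoC 1) w))) z) t = igd (Gf f d0) (RtoC 0) z t.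
Proof.
  intros Ht. cbv beta zeta. unfold igd, seg.
  destruct (Ceq_dec z (RtoC 0)) as [E|E].
  { subst z. ring. }
  replace (RtoC 0 + RtoC t * (z - RtoC 0))%C with (RtoC t * z)%C by ring.
  unfold Gf. destruct (Ceq_dec (RtoC t * z) (RtoC 0)) as [E2|E2].
  { apply Cmult_integral in E2. destruct E2 as [E2|E2]; [|contradiction].
    apply (f_equal fst) in E2. simpl in E2. lra. }
  unfold gq. f_equal. ring.
Qed.

Lemma cesaro_ex f d0 z : (forall v, Cmod v < 1 -> exists d, is_cderive f v d) ->
  f (RtoC 0) = RtoC 0 -> is_cderive f (RtoC 0) d0 -> Cmod z < 1 ->
  ex_RInt (V:=C_R_CompleteNormedModule) (fun t : R => let w := Cmult (RtoC t) z in
     Cmult (Cdiv (f w) (Cmult w (Cminus (RtoC 1) w))) z) 0 1.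
Proof.
  intros Hf Hf0 Hd Hz.
  apply (ex_RInt_ext (V:=C_R_CompleteNormedModule) (igd (Gf f d0) (RtoC 0) z)).
  { intros t Ht. rewrite Rmin_left, Rmax_right in Ht by lra. symmetry. apply cesaro_pt. lra. }
  apply ex_S. apply (contsegP (fun v => Cmod v < 1)). apply disc_convex.
  apply Gf_cont; auto. rewrite Cmod_0; lra. auto.
Qed.

Theorem corollary2p1 :
  forall alpha : R, 1 < alpha ->
  (forall (f g : C -> C) (a : C), in_bloch0 alpha f -> in_bloch0 alpha g ->
     forall z : C, Cmod z < 1 ->
       cesaro1 (fun w => Cplus (f w) (Cmult a (g w))) z
       = Cplus (cesaro1 f z) (Cmult a (cesaro1 g z))) /\
  exists K : R, 0 <= K /\
    forall f : C -> C, in_bloch0 alpha f ->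
      in_bloch0 alpha (cesaro1 f) /\
      forall M : R, bloch_bound alpha f M -> bloch_bound alpha (cesaro1 f) (K * M).
Proof.
  intros alpha Ha. split.
  - intros f g a [Hf [Hf0 _]] [Hg [Hg0 _]] z Hz.
    destruct (Hf (RtoC 0) ltac:(rewrite Cmod_0; lra)) as [df Hdf].
    destruct (Hg (RtoC 0) ltac:(rewrite Cmod_0; lra)) as [dg Hdg].
    pose proof (cesaro_ex f df z Hf Hf0 Hdf Hz) as Ef.
    pose proof (cesaro_ex g dg z Hg Hg0 Hdg Hz) as Eg.
    set (If := fun t : R => let w := Cmult (RtoC t) z in Cmult (Cdiv (f w) (Cmult w (Cminus (RtoC 1) w))) z) in *.
    set (Ig := fun t : R => let w := Cmult (RtoC t) z in Cmult (Cdiv (g w) (Cmult w (Cminus (RtoC 1) w))) z) in *.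
    unfold cesaro1. fold If. fold Ig.
    assert (HaIg : ex_RInt (V:=C_R_CompleteNormedModule) (fun t => a * Ig t)%C 0 1).
    { eexists. apply is_RInt_Cmult. apply (RInt_correct (V:=C_R_CompleteNormedModule)). auto. }
    rewrite (RInt_CR_ext _ (fun t => (If t + a * Ig t)%C)).
    2:{ intros t. unfold If, Ig. cbv beta zeta. unfold Cdiv. ring. }
    replace (a * RInt (V:=C_R_CompleteNormedModule) Ig 0 1)%C with (RInt (V:=C_R_CompleteNormedModule) (fun t => a * Ig t)%C 0 1).
    2:{ apply (is_RInt_unique (V:=C_R_CompleteNormedModule)). apply is_RInt_Cmult. apply (RInt_correct (V:=C_R_CompleteNormedModule)). auto. }
    exact (RInt_plus (V:=C_R_CompleteNormedModule) If (fun t => a * Ig t)%C 0 1 Ef HaIg).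
  - set (P := Rpower 2 alpha).
    assert (HP : 1 <= P).
    { unfold P. rewrite <- (Rpower_1_base alpha). apply Rle_Rpower_l; lra. }
    assert (Hia : 0 < / (alpha - 1)) by (apply Rinv_0_lt_compat; lra).
    exists (2 * P * (1 + / (alpha - 1))). split. nra.
    intros f [Hf [Hf0 [M0 HM0]]].
    destruct (Hf (RtoC 0) ltac:(rewrite Cmod_0; lra)) as [d0 Hd0].
    assert (Hder := cesaro_deriv f d0 Hf Hf0 Hd0).
    assert (Hbd : forall M, bloch_bound alpha f M -> bloch_bound alpha (cesaro1 f) (2 * P * (1 + / (alpha - 1)) * M)).
    { intros M HM z d Hz Hd.
      assert (HM0' : 0 <= M).
      { specialize (HM (RtoC 0) d0 ltac:(rewrite Cmod_0; lra) Hd0).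
        pose proof (Rpower_pos (1 - Cmod (RtoC 0) ^ 2) alpha). pose proof (Cmod_ge_0 d0). nra. }
      assert (Hdd : d = Gf f d0 z).
      { rewrite <- (is_C_derive_unique _ _ _ Hd). apply is_C_derive_unique. apply Hder; auto. }
      subst d.
      assert (HK0 : 1 <= 2 * P * (1 + / (alpha - 1))).
      { assert (1 <= 1 + / (alpha - 1)) by lra.
        assert (2 <= 2 * P) by lra.
        assert (2 * 1 <= 2 * P * (1 + / (alpha - 1))) by (apply Rmult_le_compat; lra). lra. }
      assert (HK1 : M <= 2 * P * (1 + / (alpha - 1)) * M).
      { rewrite <- (Rmult_1_l M) at 1. apply Rmult_le_compat_r; lra. }
      unfold Gf. destruct (Ceq_dec z (RtoC 0)) as [E|E].
      { subst z. specialize (HM (RtoC 0) d0 ltac:(rewrite Cmod_0; lra) Hd0). lra. }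
      unfold gq.
      assert (Hzp : 0 < Cmod z) by (apply Cmod_gt_0; auto).
      set (rho := Cmod z) in *.
      assert (Hy : 1 - rho <= Cmod (RtoC 1 - z)).
      { assert (Cmod (RtoC 1) <= Cmod (RtoC 1 - z) + Cmod z).
        { replace (RtoC 1) with ((RtoC 1 - z) + z)%C at 1 by ring. apply Cmod_triangle. }
        rewrite Cmod_1 in H. unfold rho. lra. }
      assert (H1z : (RtoC 1 - z)%C <> RtoC 0) by (intro E2; rewrite E2, Cmod_0 in Hy; lra).
      rewrite Cmod_div by (intro E2; apply Cmult_integral in E2; destruct E2; auto).
      rewrite Cmod_mult. fold rho.
      set (y := Cmod (RtoC 1 - z)) in *. set (F := Cmod (f z)).
      set (P1 := Rpower (1 - rho) alpha). set (P2 := Rpower (1 + rho) alpha).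
      assert (HP1 : 0 < P1) by apply Rpower_pos. assert (HP2 : 0 < P2) by apply Rpower_pos.
      assert (HPP : Rpower (1 - rho ^ 2) alpha = P1 * P2).
      { unfold P1, P2. rewrite Rpower_mult_distr by lra. f_equal. ring. }
      rewrite HPP.
      assert (HP2P : P2 <= P) by (apply Rle_Rpower_l; lra).
      assert (HF0 : 0 <= F) by apply Cmod_ge_0.
      assert (Key : P1 * P2 * F <= 2 * P * (1 + / (alpha - 1)) * M * (rho * y)).
      { destruct (Rle_lt_dec rho (/2)) as [Hs|Hs].
        - pose proof (f_crude alpha f M z ltac:(lra) Hf Hf0 HM Hz) as Hc. fold rho F P1 in Hc.
          assert (P1 * P2 * F <= P * (rho * M)).
          { replace (P1 * P2 * F) with (P2 * (F * P1)) by ring.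
            apply Rle_trans with (P2 * (rho * M)). apply Rmult_le_compat_l; lra.
            apply Rmult_le_compat_r; nra. }
          assert (P * (rho * M) <= 2 * P * (rho * M) * y).
          { assert (0 <= P * (rho * M)) by nra. nra. }
          assert (0 <= 2 * P * (rho * M) * y * / (alpha - 1)).
          { apply Rmult_le_pos; [|lra]. assert (0 <= y) by apply Cmod_ge_0. nra. }
          nra.
        - pose proof (f_sharp alpha f M z Ha HM0' Hf Hf0 HM Hz) as Hc. fold rho F in Hc.
          assert (HR : Rpower (1 - rho) (1 - alpha) = (1 - rho) * / P1).
          { unfold P1. replace (1 - alpha) with (1 + - alpha) by ring.
            rewrite Rpower_plus, Rpower_1, Rpower_Ropp by lra. reflexivity. }
          rewrite HR in Hc.
          assert (F * (alpha - 1) * P1 <= M * y).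
          { apply Rmult_le_compat_r with (r := P1) in Hc; [|lra].
            replace (M * ((1 - rho) * / P1) * P1) with (M * (1 - rho)) in Hc by (field; lra).
            nra. }
          assert (P1 * F <= M * y * / (alpha - 1)).
          { apply Rmult_le_reg_r with (alpha - 1). lra.
            replace (M * y * / (alpha - 1) * (alpha - 1)) with (M * y) by (field; lra). nra. }
          assert (0 <= M * y * / (alpha - 1)).
          { apply Rmult_le_pos; [|lra]. assert (0 <= y) by apply Cmod_ge_0. nra. }
          assert (P1 * P2 * F <= P * (M * y * / (alpha - 1))).
          { replace (P1 * P2 * F) with (P2 * (P1 * F)) by ring.
            apply Rle_trans with (P2 * (M * y * / (alpha - 1))). apply Rmult_le_compat_l; lra.
            apply Rmult_le_compat_r; lra. }
          assert (0 <= P * (M * y)) by (assert (0 <= y) by apply Cmod_ge_0; nra).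
          set (X := P * (M * y)) in *. set (i := / (alpha - 1)) in *.
          replace (P * (M * y * i)) with (X * i) in H2 by (unfold X; ring).
          replace (2 * P * (1 + i) * M * (rho * y)) with (X * (2 * rho * (1 + i))) by (unfold X; ring).
          assert (i <= 2 * rho * (1 + i)) by nra.
          assert (X * i <= X * (2 * rho * (1 + i))) by (apply Rmult_le_compat_l; lra).
          lra. }
      unfold Rdiv. assert (0 < rho * y) by nra.
      replace (P1 * P2 * (F * / (rho * y))) with ((P1 * P2 * F) * / (rho * y)) by ring.
      apply Rmult_le_reg_r with (rho * y); auto.
      rewrite Rmult_assoc, Rinv_l by lra. lra. }
    split.
    + split; [|split].
      * intros z Hz. eexists. apply Hder; auto.
      * rewrite (cesaro_eq f d0). apply Sg_aa.
      * exists (2 * P * (1 + / (alpha - 1)) * M0). apply Hbd; auto.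
    + exact Hbd.
Qed.
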